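(* Let $p,q\in\mathbb{N}\cup\{0\}$, $N=p+q$, and let $\boldsymbol{\mu}_{p,q}: C_2^N\to C_2=\{\pm1\}$ be defined by \[ \boldsymbol{\mu}_{p,q}\big(\mathbf{e}_1^{a_1}\cdots\mathbf{e}_N^{a_N}\big) = (-1)^{\,a_{p+1}+\cdots+a_N + \sum_{1\le i<j\le N} a_ia_j}, \qquad a_i\in\{0,1\}, \] where $\mathbf{e}_1,\ldots,\mathbf{e}_N$ are the canonical generators of $C_2^N$. Then \[ \mathrm{Arf}(\boldsymbol{\mu}_{p,q}) = \mathrm{sign}\Big(\cos\frac{(p-q)\pi}{4} + \sin\frac{(p-q)\pi}{4}\Big) = \begin{cases} 1 & \text{if } p-q+1 \equiv 1,2,3 \pmod 8,\\ 0 & \text{if } p-q+1\equiv 0,4 \pmod 8,\\ -1 & \text{if } p-q+1 \equiv 5,6,7\pmod 8.\end{cases} \]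
   Context: $C_2=\{\pm1\}$ is the multiplicative group of order $2$ and $\mathbf{e}_i\in C_2^N$ has $-1$ in position $i$ and $1$ elsewhere. For a map $\boldsymbol{\mu}: C_2^N\to C_2$, the Arf invariant is $\mathrm{Arf}(\boldsymbol{\mu}) = 1$ if $|\boldsymbol{\mu}^{-1}(+1)| > |\boldsymbol{\mu}^{-1}(-1)|$, $0$ if they are equal, and $-1$ if $|\boldsymbol{\mu}^{-1}(+1)| < |\boldsymbol{\mu}^{-1}(-1)|$. $\mathrm{sign}(x)\in\{1,0,-1\}$ is the sign of the real number $x$, with $\mathrm{sign}(0)=0$. *)

(* Defs.v *)
From HB Require Import structures.
From mathcomp Require Import all_boot all_order all_algebra.
From mathcomp Require Import all_classical all_reals all_analysis.
Set Implicit Arguments. Unset Strict Implicit. Unset Printing Implicit Defensive.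
Import Order.TTheory GRing.Theory Num.Theory.
Local Open Scope ring_scope.

(* An element e_1^{a_1} ... e_N^{a_N} of C_2^N is represented by its exponent
   vector a : {ffun 'I_N -> bool} (a_i = 1 iff a i = true); this is a bijection.
   C_2 = {+1,-1} is represented inside int. *)
Definition C2N (N : nat) := {ffun 'I_N -> bool}.

Definition Arf (N : nat) (mu : C2N N -> int) : int :=
  let plus := #|[pred x | mu x == 1]| in
  let minus := #|[pred x | mu x == -1]| in
  if (minus < plus)%N then 1 else if plus == minus then 0 else -1.

(* mu_{p,q}(e_1^{a_1}...e_N^{a_N}) = (-1)^(a_{p+1}+...+a_N + sum_{i<j} a_i a_j),
   indices 0-based here: a_{p+1},...,a_N are a i with p <= i. *)
Definition mu_pq (p q : nat) (a : C2N (p + q)) : int :=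
  (-1) ^+ (\sum_(i < p + q | (p <= i)%N) (a i : nat)
           + \sum_(i < p + q) \sum_(j < p + q | (i < j)%N) (a i * a j)%N)%N.

Definition arf_cases (p q : nat) : int :=
  let r := ((p%:Z - q%:Z + 1) %% 8)%Z in
  if r \in [:: 1; 2; 3] then 1 else if r \in [:: 0; 4] then 0 else -1.

(* Main.v *)
Require Import Defs.
From HB Require Import structures.
From mathcomp Require Import all_boot all_order all_algebra.
From mathcomp Require Import all_classical all_reals all_analysis.
From mathcomp Require Import complex.
From mathcomp Require Import zify ring lra.
Import Order.TTheory GRing.Theory Num.Theory.
Local Open Scope ring_scope.






Lemma mulC (a b c d : rat) : Complex a b * Complex c d = Complex (a*c - b*d) (a*d + b*c).
Proof. by []. Qed.
Lemma quad n (a : 'I_n -> bool) :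
  (\sum_(i < n) \sum_(j < n | (i < j)%N) (a i * a j))%N = 'C(\sum_(i < n) (a i : nat), 2).
Proof.
set T := (\sum_(i < n) _)%N.
set s := (\sum_(i < n) _)%N.
have ss : (s * s = T + T + s)%N.
  rewrite /s big_distrl /=.
  have -> : (\sum_(i < n) (a i : nat) * \sum_(j < n) (a j : nat) =
     \sum_(i < n) (\sum_(j < n | (i < j)%N) (a i * a j) + \sum_(j < n | (j < i)%N) (a j * a i) + (a i : nat)))%N.
    apply: eq_bigr => i _; rewrite big_distrr /=.
    rewrite (bigID (fun j : 'I_n => (i < j)%N)) /= -addnA; congr (_ + _)%N.
    rewrite (bigD1 i) /=; last by rewrite ltnn.
    rewrite addnC; congr (_ + _)%N; last by case: (a i).
    apply: eq_big => [j|j _]; last by rewrite mulnC.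
    move=> /=. by rewrite -leqNgt ltn_neqAle andbC.
  rewrite !big_split /=; congr (_ + _ + _)%N.
  rewrite (exchange_big_dep xpredT) //=.
rewrite bin2.
have -> : (s * s.-1 = T.*2)%N.
  case: s ss => [|s'] /=; first by lia.
  rewrite mulnS -addnn; lia.
by rewrite doubleK.
Qed.

Local Notation C := (complex rat).
Definition ci : C := Complex 0 1.
Definition Re (z : C) : rat := let: Complex a _ := z in a.
Lemma ReD (x y : C) : Re (x + y) = Re x + Re y. Proof. by case: x; case: y. Qed.
Lemma ReN (x : C) : Re (- x) = - Re x. Proof. by case: x. Qed.
Lemma Re0 : Re (0 : C) = 0. Proof. by []. Qed.
Lemma Re_sum (I : finType) (F : I -> C) : Re (\sum_i F i) = \sum_i Re (F i).
Proof. exact: (big_morph _ ReD Re0). Qed.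
Lemma ReN1X n (z : C) : Re ((-1) ^+ n * z) = (-1) ^+ n * Re z.
Proof.
elim: n => [|n IH]; first by rewrite !expr0 !mul1r.
by rewrite !exprS !mulN1r !mulNr ReN IH.
Qed.
Lemma ReCi k : Re (Complex 1 (-1) * ci ^+ k) = (-1) ^+ 'C(k, 2).
Proof.
suff : Complex 1 (-1) * ci ^+ k = Complex ((-1) ^+ 'C(k, 2)) (- (-1) ^+ 'C(k.+1, 2)) by move=> ->.
elim: k => [|k IH]; first by rewrite expr0 mulr1.
rewrite exprS mulrCA IH binS bin1 [in RHS]binS bin1 /=.
have e : ('C(k.+1,2) + k.+1 = 'C(k,2) + (2 * k).+1)%N by rewrite binS bin1; lia.
rewrite e /ci; apply/eqP; rewrite eq_complex /= !mul0r !mul1r sub0r opprK add0r eqxx /=.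
by rewrite exprD exprS exprM sqrrN !expr1n mulr1 mulrN1 opprK.
Qed.
Definition Fz (p N : nat) (j : 'I_N) (b : bool) : C :=
  if b then (if (p <= j)%N then Complex 0 (-1) else ci) else 1.
Arguments Fz p {N} j b.
Lemma Fz_pow p N (j : 'I_N) b :
  Fz p j b = ci ^+ b * (-1) ^+ (if (p <= j)%N then (b : nat) else 0%N).
Proof.
rewrite /Fz; by case: b; case: (leqP p j) => H; rewrite /= ?expr0 ?expr1 ?mulr1 ?mul1r //; apply/eqP.
Qed.
Lemma mu_term p q (a : C2N (p + q)) :
  ((mu_pq a)%:~R : rat) = Re (Complex 1 (-1) * \prod_(j < p + q) Fz p j (a j)).
Proof.
rewrite /mu_pq quad intr_sign exprD.
rewrite (eq_bigr (fun j : 'I_(p + q) => ci ^+ a j * (-1) ^+ (if (p <= j)%N then (a j : nat) else 0%N))); last by move=> j _; rewrite Fz_pow.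
rewrite big_split /= !prodrXr [X in (-1) ^+ X * _ = _]big_mkcond /=.
by rewrite [ci ^+ _ * _]mulrC mulrCA ReN1X ReCi.
Qed.
Lemma sum_mu p q :
  ((\sum_(a : C2N (p + q)) mu_pq a)%:~R : rat)
  = Re (Complex 1 (-1) * (Complex 1 1) ^+ p * (Complex 1 (-1)) ^+ q).
Proof.
rewrite rmorph_sum /=.
under eq_bigr do rewrite mu_term.
rewrite -Re_sum -mulr_sumr -bigA_distr_bigA /= -mulrA; congr (Re (_ * _)).
rewrite big_split_ord /=.
congr (_ * _).
  rewrite -[in RHS](card_ord p) -prodr_const; apply: eq_bigr => j _.
  by rewrite big_bool /Fz /= leqNgt ltn_ord.
rewrite -[in RHS](card_ord q) -prodr_const; apply: eq_bigr => j _.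
by rewrite big_bool /Fz /= leq_addr.
Qed.
Definition vx (k : nat) : int := nth 0 [:: 1; 1; 0; -1; -1; -1; 0; 1] k.
Definition vy (k : nat) : int := nth 0 [:: 0; 1; 1; 1; 0; -1; -1; -1] k.
Definition cf (k : nat) : int := if odd k then 2 else 1.
Lemma tbl k : (k < 8)%N ->
  [/\ cf k * vx ((k + 1) %% 8) = vx k - vy k, cf k * vy ((k + 1) %% 8) = vx k + vy k,
      cf k * vx ((k + 7) %% 8) = vx k + vy k & cf k * vy ((k + 7) %% 8) = vy k - vx k].
Proof. by case: k => [|[|[|[|[|[|[|[|k]]]]]]]] //= _; split. Qed.
Lemma cf_gt0 k : 0 < cf k. Proof. by rewrite /cf; case: odd. Qed.
Lemma mulC4 (a b c d : rat) : Complex a b * Complex c d = Complex (a*c - b*d) (a*d + b*c).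
Proof. by []. Qed.
Definition Inv (z : C) k := exists2 t : int, 0 < t & z = Complex ((t * vx k)%:~R) ((t * vy k)%:~R).
Lemma step_plus z k : (k < 8)%N -> Inv z k -> Inv (z * Complex 1 1) ((k + 1) %% 8).
Proof.
move=> hk [t t0 ->]; have [e1 e2 _ _] := tbl k hk.
exists (t * cf k); first by rewrite mulr_gt0 // cf_gt0.
rewrite mulC4 !mulr1 -intrB -intrD -!mulrBr -!mulrDr -e1 -e2.
by rewrite !mulrA.
Qed.
Lemma step_minus z k : (k < 8)%N -> Inv z k -> Inv (z * Complex 1 (-1)) ((k + 7) %% 8).
Proof.
move=> hk [t t0 ->]; have [_ _ e1 e2] := tbl k hk.
exists (t * cf k); first by rewrite mulr_gt0 // cf_gt0.
rewrite mulC4 !mulr1 !mulrN1 opprK [- _ + _]addrC -intrD -intrB -!mulrBr -!mulrDr -e1 -e2.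
by rewrite !mulrA.
Qed.
Definition zz p q : C := Complex 1 (-1) * (Complex 1 1) ^+ p * (Complex 1 (-1)) ^+ q.
Definition kk (p q : nat) := ((p + 7 * q + 7) %% 8)%N.
Lemma inv_pq p q : Inv (zz p q) (kk p q).
Proof.
elim: q => [|q IHq].
  elim: p => [|p IHp].
    by exists 1 => //; rewrite /zz !expr0 !mulr1.
  have -> : kk p.+1 0 = ((kk p 0 + 1) %% 8)%N by rewrite /kk modnDml; congr (_ %% _)%N; lia.
  have -> : zz p.+1 0 = zz p 0 * Complex 1 1 by rewrite /zz !expr0 !mulr1 exprSr mulrA.
  by apply: step_plus => //; rewrite /kk ltn_pmod.
have -> : kk p q.+1 = ((kk p q + 7) %% 8)%N by rewrite /kk modnDml; congr (_ %% _)%N; lia.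
have -> : zz p q.+1 = zz p q * Complex 1 (-1) by rewrite /zz exprSr mulrA.
by apply: step_minus => //; rewrite /kk ltn_pmod.
Qed.
Lemma Arf_sg N (mu : C2N N -> int) : (forall a, mu a = 1 \/ mu a = -1) ->
  Arf mu = Num.sg (\sum_a mu a).
Proof.
move=> hmu.
have -> : \sum_a mu a = #|[pred x | mu x == 1]|%:Z - #|[pred x | mu x == -1]|%:Z.
  rewrite (bigID (fun a => mu a == 1)) /=; congr (_ + _).
    rewrite -natz -sum1_card natr_sum; apply: eq_big => // a /eqP ->.
    by [].
  rewrite -natz -sum1_card natr_sum -sumrN; apply: eq_big => [a|a].
    by rewrite !inE; case: (hmu a) => ->.
  by case: (hmu a) => ->.
rewrite /Arf; case: ltngtP => h.
- by rewrite gtr0_sg // subr_gt0 ltz_nat.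
- by rewrite ltr0_sg // subr_lt0 ltz_nat.
- by rewrite h subrr sgr0.
Qed.
Section Trig.
Variable R : realType.
Local Notation h := (pi / 4 : R).
Lemma L2 j : cos ((j.+2)%:R * h) = - sin (j%:R * h) /\ sin ((j.+2)%:R * h) = cos (j%:R * h).
Proof.
have -> : (j.+2)%:R * h = j%:R * h + pi / 2.
  rewrite -addn2 natrD mulrDl; congr (_ + _); lra.
by rewrite cosDpihalf sinDpihalf.
Qed.
Lemma per2 (x : R) : cos (x + 2 * pi) = cos x /\ sin (x + 2 * pi) = sin x.
Proof.
have -> : x + 2 * pi = x + pi / 2 + pi / 2 + pi / 2 + pi / 2 by lra.
by split; rewrite !(cosDpihalf, sinDpihalf, opprK).
Qed.
Lemma perN n (x : R) : cos (x + 2 * pi * n%:R) + sin (x + 2 * pi * n%:R) = cos x + sin x.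
Proof.
elim: n => [|n IH]; first by rewrite mulr0 addr0.
have -> : x + 2 * pi * n.+1%:R = x + 2 * pi * n%:R + 2 * pi by rewrite -addn1 natrD; lra.
by have [-> ->] := per2 (x + 2 * pi * n%:R).
Qed.
Lemma vals k : (k < 8)%N ->
  Num.sg (cos ((k.+1)%:R * h) + sin ((k.+1)%:R * h)) = (vx k)%:~R.
Proof.
have sc : sin h = cos h.
  by rewrite -cosBpihalf (_ : h - pi / 2 = - h) ?cosN //; lra.
have c0 : 0 < cos h.
  by apply: cos_gt0_pihalf; have := pi_gt0 R; lra.
have [c1 s1] : cos (1%:R * h) = cos h /\ sin (1%:R * h) = cos h by rewrite mul1r sc.
have [c2 s2] : cos (2%:R * h) = 0 /\ sin (2%:R * h) = 1.
  by have [-> ->] := L2 0; rewrite mul0r sin0 cos0 oppr0.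
have [c3 s3] : cos (3%:R * h) = - cos h /\ sin (3%:R * h) = cos h.
  by have [-> ->] := L2 1; rewrite s1 c1.
have [c4 s4] : cos (4%:R * h) = - 1 /\ sin (4%:R * h) = 0.
  by have [-> ->] := L2 2; rewrite s2 c2.
have [c5 s5] : cos (5%:R * h) = - cos h /\ sin (5%:R * h) = - cos h.
  by have [-> ->] := L2 3; rewrite s3 c3.
have [c6 s6] : cos (6%:R * h) = 0 /\ sin (6%:R * h) = - 1.
  by have [-> ->] := L2 4; rewrite s4 c4 oppr0.
have [c7 s7] : cos (7%:R * h) = cos h /\ sin (7%:R * h) = - cos h.
  by have [-> ->] := L2 5; rewrite s5 c5 opprK.
have [c8 s8] : cos (8%:R * h) = 1 /\ sin (8%:R * h) = 0.
  by have [-> ->] := L2 6; rewrite s6 c6 opprK.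
case: k => [|[|[|[|[|[|[|[|k]]]]]]]] //= _.
- by rewrite c1 s1 gtr0_sg //; lra.
- by rewrite c2 s2 add0r sgr1.
- by rewrite c3 s3 addNr sgr0.
- by rewrite c4 s4 addr0 ltr0_sg //; lra.
- by rewrite c5 s5 ltr0_sg //; lra.
- by rewrite c6 s6 add0r ltr0_sg //; lra.
- by rewrite c7 s7 addrN sgr0.
- by rewrite c8 s8 addr0 sgr1.
Qed.
End Trig.
Theorem theorem7p1 (R : realType) (p q : nat) :
  ((Arf (@mu_pq p q))%:~R : R)
    = Num.sg (cos ((p%:R - q%:R) * pi / 4) + sin ((p%:R - q%:R) * pi / 4) : R)
  /\ Arf (@mu_pq p q) = arf_cases p q.
Proof.
have hk : (kk p q < 8)%N by rewrite ltn_pmod.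
have hArf : Arf (@mu_pq p q) = vx (kk p q).
  rewrite Arf_sg; last first.
    move=> a; rewrite /mu_pq -signr_odd.
    by case: odd; [right|left]; rewrite ?expr1 ?expr0.
  have [t t0 e] := inv_pq p q.
  have := sum_mu p q; rewrite -/(zz p q) e /= => /intr_inj ->.
  rewrite sgrM gtr0_sg // mul1r.
  by move: hk; case: (kk p q) => [|[|[|[|[|[|[|[|k]]]]]]]].
split.
  rewrite hArf -(@vals R _ hk); congr Num.sg.
  set k := kk p q.
  set a := ((p + 7 * q + 7) %/ 8)%N.
  have e : (p + 7 * q + 7 = a * 8 + k)%N by rewrite /a /k /kk -divn_eq.
  have eR : (p%:R + 7 * q%:R + 7 : R) = a%:R * 8 + k%:R.
    have := congr1 (fun n => n%:R : R) e; rewrite !natrD !natrM; lra.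
  rewrite -(@perN R (q.+1) ((p%:R - q%:R) * pi / 4)) -(@perN R a ((k.+1)%:R * (pi/4))).
  have -> : (p%:R - q%:R) * pi / 4 + 2 * pi * q.+1%:R = (k.+1)%:R * (pi/4) + 2 * pi * a%:R :> R.
    have hp : p%:R = a%:R * 8 + k%:R - 7 * q%:R - 7 :> R by lra.
    rewrite hp -[k.+1]addn1 -[q.+1]addn1 !natrD; field.
  by [].
  by [].
rewrite hArf /arf_cases.
have -> : ((p%:Z - q%:Z + 1) %% 8)%Z = ((kk p q + 2) %% 8)%N%:Z.
  have -> : (p%:Z - q%:Z + 1 = (- (q.+1)%:Z) * 8 + (p + 7 * q + 9)%N%:Z) by lia.
  rewrite modzMDl modz_nat; congr Posz; rewrite /kk modnDml; congr (_ %% _)%N; lia.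
by move: hk; case: (kk p q) => [|[|[|[|[|[|[|[|k]]]]]]]].
Qed.
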